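(* Let $\mathsf P$ be a rider piece having three distinct basic moves $m_1=(c_1,d_1)$, $m_2=(c_2,d_2)$, $m_3=(c_3,d_3)$, and let $q=3$ on the square board $[0,1]^2$. Let $w_1,w_2,w_3$ be nonzero integers with $\gcd(w_1,w_2,w_3)=1$ and $w_1m_1+w_2m_2+w_3m_3=(0,0)$. Consider a triangular configuration $\mathbf z=(z_1,z_2,z_3)$ of three pieces (a nondegenerate triangle with vertices in $[0,1]^2$) in which the pieces attack pairwise along the three distinct move directions $m_1,m_2,m_3$ (i.e. $\mathbf z$ lies in three move hyperplanes, one for each pair of pieces, using the three different moves), together with three fixations that fix its position in the square (i.e. these three move equations and three fixations have $\mathbf z$ as their unique common solution). Then $\mathbf z$ is a vertex of the inside-out polytope $([0,1]^6,\mathcal A_{\mathsf P})$ and its denominator is $$\Delta(\mathbf z)=\max(|w_1c_1|,|w_1d_1|,|w_2c_2|,|w_2d_2|,|w_3c_3|,|w_3d_3|).$$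
   Context: A rider piece has a finite set of basic moves: nonzero integer vectors $(c,d)$ with $\gcd(c,d)=1$, no two parallel (so $w_1,w_2,w_3$ exist and are unique up to simultaneous negation). For $3$ pieces, configurations are points $(z_1,z_2,z_3)\in\mathbb R^6$, $z_i=(x_i,y_i)$; the move hyperplane for move $(c,d)$ and pieces $i,j$ is $\mathcal H^{d/c}_{ij}=\{(z_j-z_i)\cdot(d,-c)=0\}$, and $\mathcal A_{\mathsf P}$ is the set of all these. A fixation is one of the equations $x_i=0$, $y_i=0$, $x_i=1$, $y_i=1$. A vertex of $([0,1]^6,\mathcal A_{\mathsf P})$ is a point of $[0,1]^6$ that is the unique common solution of some move equations and fixations. $\Delta(\mathbf z)$ is the least common denominator of the coordinates of $\mathbf z$. *)

(* Defs.v *)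
From HB Require Import structures.
From mathcomp Require Import all_boot all_order all_algebra.
From mathcomp Require Import reals.
Set Implicit Arguments. Unset Strict Implicit. Unset Printing Implicit Defensive.
Import Order.TTheory GRing.Theory Num.Theory.
Local Open Scope ring_scope.

Definition move := (int * int)%type.

Definition rider (P : seq move) : Prop :=
  uniq P /\
  (forall m, m \in P -> m != (0, 0) /\ gcdz m.1 m.2 = 1) /\
  (forall m m', m \in P -> m' \in P -> m != m' -> m.1 * m'.2 - m'.1 * m.2 != 0).

Definition config (R : realType) := 'I_3 -> (R * R)%type.

Definition on_move_hyp (R : realType) (m : move) (i j : 'I_3) (z : config R) : Prop :=
  ((z j).1 - (z i).1) * (m.2)%:~R - ((z j).2 - (z i).2) * (m.1)%:~R = 0.

Definition move_eq := (move * 'I_3 * 'I_3)%type.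
Definition me_move (e : move_eq) : move := e.1.1.
Definition me_i (e : move_eq) : 'I_3 := e.1.2.
Definition me_j (e : move_eq) : 'I_3 := e.2.

(* A fixation: x_i = 0, y_i = 0, x_i = 1 or y_i = 1.
   fx_isx = true means the x-coordinate; fx_one = true means the value 1. *)
Definition fixation := ('I_3 * bool * bool)%type.
Definition fx_piece (f : fixation) : 'I_3 := f.1.1.
Definition fx_isx (f : fixation) : bool := f.1.2.
Definition fx_one (f : fixation) : bool := f.2.

Definition sat_fix (R : realType) (f : fixation) (z : config R) : Prop :=
  (if fx_isx f then (z (fx_piece f)).1 else (z (fx_piece f)).2)
  = (if fx_one f then 1 else 0).

Definition sat_move_eq (R : realType) (e : move_eq) (z : config R) : Prop :=
  on_move_hyp (me_move e) (me_i e) (me_j e) z.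

Definition in_unit_cube (R : realType) (z : config R) : Prop :=
  forall i, (0 <= (z i).1 <= 1) /\ (0 <= (z i).2 <= 1).

(* z is a vertex of ([0,1]^6, A_P): a point of [0,1]^6 that is the unique
   common solution of some move equations (of P) and fixations. *)
Definition is_vertex (R : realType) (P : seq move) (z : config R) : Prop :=
  in_unit_cube z /\
  exists (E : seq move_eq) (F : seq fixation),
    (forall e, e \in E -> me_move e \in P /\ me_i e != me_j e) /\
    (forall z' : config R,
        ((forall e, e \in E -> sat_move_eq e z') /\
         (forall f, f \in F -> sat_fix f z'))
        <-> (forall i, z' i = z i)).

Definition clears_denoms (R : realType) (z : config R) (N : nat) : Prop :=
  forall i, (N%:R * (z i).1 \is a Num.int) /\ (N%:R * (z i).2 \is a Num.int).

Definition is_lcd (R : realType) (z : config R) (N : nat) : Prop :=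
  (0 < N)%N /\ clears_denoms z N /\
  (forall M : nat, (0 < M)%N -> clears_denoms z M -> (N <= M)%N).

Definition triangle_nondeg (R : realType) (z : config R) : Prop :=
  ((z 1).1 - (z 0).1) * ((z 2).2 - (z 0).2)
  - ((z 2).1 - (z 0).1) * ((z 1).2 - (z 0).2) != 0.

(* Main.v *)
Require Import Defs.
From HB Require Import structures.
From mathcomp Require Import all_boot all_order all_algebra.
From mathcomp Require Import reals.
From mathcomp Require Import ring lra.
Import Order.TTheory GRing.Theory Num.Theory.
Local Open Scope ring_scope.

Definition o0 : 'I_3 := @Ordinal 3 0 isT.
Definition o1 : 'I_3 := @Ordinal 3 1 isT.
Definition o2 : 'I_3 := @Ordinal 3 2 isT.
Lemma ord3P (i : 'I_3) : [\/ i = o0, i = o1 | i = o2].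
Proof.
case: i => [[|[|[|//]]] Hi]; [constructor 1|constructor 2|constructor 3]; exact: val_inj.
Qed.
Lemma ord3L (i : 'I_3) :
  [\/ i = ord0, i = lift ord0 ord0 | i = lift ord0 (lift ord0 ord0)].
Proof.
case: i => [[|[|[|//]]] Hi]; [constructor 1|constructor 2|constructor 3]; exact: val_inj.
Qed.
Definition succ3 (i : 'I_3) : 'I_3 := if i == o0 then o1 else if i == o1 then o2 else o0.
Definition pe (a b i j : 'I_3) := ((a == i) && (b == j)) || ((a == j) && (b == i)).
Definition sg (R : realType) (a b : 'I_3) : R := if b == succ3 a then 1 else -1.

Lemma sg_sq (R : realType) a b : sg R a b * sg R a b = 1.
Proof. by rewrite /sg; case: ifP => _; rewrite ?mulr1 ?mulrNN ?mulr1. Qed.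

Lemma sg_int (R : realType) a b : sg R a b \is a Num.int.
Proof. by rewrite /sg; case: ifP => _; rewrite ?rpredN rpred1. Qed.

Lemma sg_norm (R : realType) a b : `|sg R a b| = 1.
Proof. by rewrite /sg; case: ifP => _; rewrite ?normrN normr1. Qed.

Lemma C1six (R : realType) (a0 a1 a2 b0 b1 b2 : 'I_3) (f : 'I_3 -> R) :
  a0 != b0 -> a1 != b1 -> a2 != b2 -> ~~ pe a0 b0 a1 b1 -> ~~ pe a0 b0 a2 b2 -> ~~ pe a1 b1 a2 b2 ->
  sg R a0 b0 * (f b0 - f a0) + (sg R a1 b1 * (f b1 - f a1) + (sg R a2 b2 * (f b2 - f a2) + 0)) = 0.
Proof.
rewrite /sg.
case: (ord3P a0)=> ->; case: (ord3P b0)=> ->; rewrite //=;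
case: (ord3P a1)=> ->; case: (ord3P b1)=> ->; rewrite //=;
case: (ord3P a2)=> ->; case: (ord3P b2)=> ->; rewrite //= => _ _ _ _ _ _; ring.
Qed.

Lemma C2six (a0 a1 a2 b0 b1 b2 : 'I_3) :
  a0 != b0 -> a1 != b1 -> a2 != b2 -> ~~ pe a0 b0 a1 b1 -> ~~ pe a0 b0 a2 b2 -> ~~ pe a1 b1 a2 b2 ->
  forall i j, i != j -> [|| pe a0 b0 i j, pe a1 b1 i j | pe a2 b2 i j].
Proof.
case: (ord3P a0)=> ->; case: (ord3P b0)=> ->; rewrite //=;
case: (ord3P a1)=> ->; case: (ord3P b1)=> ->; rewrite //=;
case: (ord3P a2)=> ->; case: (ord3P b2)=> ->; rewrite //= => _ _ _ _ _ _ i j;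
case: (ord3P i)=> ->; case: (ord3P j)=> ->; by [].
Qed.

Lemma pd_of_set (x y x' y' : 'I_3) : [set x; y] != [set x'; y'] -> ~~ pe x y x' y'.
Proof.
apply: contra; rewrite /pe; case/orP => /andP [/eqP -> /eqP ->] //.
by rewrite setUC.
Qed.

Lemma comb (R : realType) (a b : 'I_3 -> 'I_3) :
  (forall k, a k != b k) ->
  (forall k l, k != l -> [set a k; b k] != [set a l; b l]) ->
  (forall f : 'I_3 -> R, \sum_(k < 3) sg R (a k) (b k) * (f (b k) - f (a k)) = 0) /\
  (forall i j, i != j -> exists k, pe (a k) (b k) i j).
Proof.
move=> hab hset.
have p01 := pd_of_set _ _ _ _ (hset ord0 (lift ord0 ord0) isT).
have p02 := pd_of_set _ _ _ _ (hset ord0 (lift ord0 (lift ord0 ord0)) isT).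
have p12 := pd_of_set _ _ _ _ (hset (lift ord0 ord0) (lift ord0 (lift ord0 ord0)) isT).
split.
- move=> f; rewrite !big_ord_recl big_ord0; by apply: C1six.
- move=> i j nij.
  have := C2six _ _ _ _ _ _ (hab _) (hab _) (hab _) p01 p02 p12 i j nij.
  case/or3P => h; [exists ord0 | exists (lift ord0 ord0) | exists (lift ord0 (lift ord0 ord0))]; done.
Qed.

Definition tdef (R : realType) (ux uy : R) (c d : int) : R :=
  if c != 0 then ux / c%:~R else uy / d%:~R.
Arguments tdef {R}.

Lemma tdefP (R : realType) (ux uy : R) (c d : int) :
  (c, d) != (0, 0) -> ux * d%:~R - uy * c%:~R = 0 ->
  ux = tdef ux uy c d * c%:~R /\ uy = tdef ux uy c d * d%:~R.
Proof.
move=> nz H; rewrite /tdef; case: (eqVneq c 0) => [c0|c0] /=.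
- subst c; have d0 : d != 0 by apply: contraNneq nz => ->.
  have d0' : (d%:~R : R) != 0 by rewrite intr_eq0.
  move: H; rewrite mulr0 subr0 => /eqP; rewrite mulf_eq0 (negbTE d0') orbF => /eqP ->.
  by rewrite mulr0 divfK.
- have c0' : (c%:~R : R) != 0 by rewrite intr_eq0.
  split; first by rewrite divfK.
  apply: (mulIf c0'); rewrite mulrAC divfK //.
  by apply/eqP; rewrite eq_sym -subr_eq0 -H; apply/eqP; ring.
Qed.

Lemma prop3 (R : realType) (v0 v1 v2 w0 w1 w2 c0 c1 c2 d0 d1 d2 : R) :
  w0 != 0 -> c1 * d2 - c2 * d1 != 0 ->
  v0 * c0 + (v1 * c1 + (v2 * c2 + 0)) = 0 ->
  v0 * d0 + (v1 * d1 + (v2 * d2 + 0)) = 0 ->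
  w0 * c0 + (w1 * c1 + (w2 * c2 + 0)) = 0 ->
  w0 * d0 + (w1 * d1 + (w2 * d2 + 0)) = 0 ->
  v1 = v0 / w0 * w1 /\ v2 = v0 / w0 * w2.
Proof.
move=> w0n nd Hvc Hvd Hwc Hwd.
have E1 : (w0 * v1 - v0 * w1) * (c1 * d2 - c2 * d1) = 0.
  have -> : (w0 * v1 - v0 * w1) * (c1 * d2 - c2 * d1) =
    d2 * (w0 * (v0 * c0 + (v1 * c1 + (v2 * c2 + 0))) - v0 * (w0 * c0 + (w1 * c1 + (w2 * c2 + 0))))
    - c2 * (w0 * (v0 * d0 + (v1 * d1 + (v2 * d2 + 0))) - v0 * (w0 * d0 + (w1 * d1 + (w2 * d2 + 0))))
    by ring.
  by rewrite Hvc Hvd Hwc Hwd; ring.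
have E2 : (w0 * v2 - v0 * w2) * (c1 * d2 - c2 * d1) = 0.
  have -> : (w0 * v2 - v0 * w2) * (c1 * d2 - c2 * d1) =
    c1 * (w0 * (v0 * d0 + (v1 * d1 + (v2 * d2 + 0))) - v0 * (w0 * d0 + (w1 * d1 + (w2 * d2 + 0))))
    - d1 * (w0 * (v0 * c0 + (v1 * c1 + (v2 * c2 + 0))) - v0 * (w0 * c0 + (w1 * c1 + (w2 * c2 + 0))))
    by ring.
  by rewrite Hvc Hvd Hwc Hwd; ring.
move: E1 E2 => /eqP; rewrite mulf_eq0 (negbTE nd) orbF subr_eq0 => /eqP E1.
move=> /eqP; rewrite mulf_eq0 (negbTE nd) orbF subr_eq0 => /eqP E2.
split; apply: (mulfI w0n).
- by rewrite E1; field.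
- by rewrite E2; field.
Qed.

Lemma norm1 (R : realType) (x : R) : `|x| = 1 -> x = 1 \/ x = -1.
Proof.
case: (lerP 0 x) => h.
- by rewrite ger0_norm // => ->; left.
- by rewrite ltr0_norm // => <-; right; rewrite opprK.
Qed.

Arguments tdefP {R ux uy c d}.
Arguments prop3 {R v0 v1 v2 w0 w1 w2 c0 c1 c2 d0 d1 d2}.
Arguments norm1 {R x}.
Arguments comb {R a b}.
Definition coord (R : realType) (bx : bool) (p : R * R) : R := if bx then p.1 else p.2.
Arguments coord {R}.
Definition mc (bx : bool) (mv : move) : int := if bx then mv.1 else mv.2.

Theorem proposition5p1 (R : realType) (P : seq move)
  (m : 'I_3 -> move) (w : 'I_3 -> int)
  (a b : 'I_3 -> 'I_3) (fx : 'I_3 -> fixation) (z : config R) :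
  rider P ->
  (forall k, m k \in P) ->
  (forall k l, k != l -> m k != m l) ->
  (forall k, w k != 0) ->
  gcdz (gcdz (w 0) (w 1)) (w 2) = 1 ->
  \sum_(k < 3) w k * (m k).1 = 0 ->
  \sum_(k < 3) w k * (m k).2 = 0 ->
  in_unit_cube z ->
  triangle_nondeg z ->
  (* pair {a k, b k} of pieces attacks along move m k; the three pairs are distinct *)
  (forall k, a k != b k) ->
  (forall k l, k != l -> [set a k; b k] != [set a l; b l]) ->
  (forall k, on_move_hyp (m k) (a k) (b k) z) ->
  (* the three move equations and three fixations have z as unique common solution *)
  (forall z' : config R,
      (forall k, on_move_hyp (m k) (a k) (b k) z') ->
      (forall k, sat_fix (fx k) z') ->
      forall i, z' i = z i) ->
  (forall k, sat_fix (fx k) z) ->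
  is_vertex P z /\
  is_lcd z (\max_(k < 3) maxn (absz (w k * (m k).1)%R) (absz (w k * (m k).2)%R))%N.
Proof.
move=> [Puniq [Pnz Pnp]] mP mdiff wnz wgcd sumc sumd cube tri hab hset hmv huniq hfix.
have vert : is_vertex P z.
{ split=> //.
  exists [seq (m k, a k, b k) | k <- enum 'I_3], [seq fx k | k <- enum 'I_3]; split.
  - move=> e /mapP [k _ ->]; rewrite /me_move /me_i /me_j /=; split; [exact: mP | exact: hab].
  - move=> z'; split.
    + case=> H1 H2; apply: huniq => k.
      * by apply: (H1 (m k, a k, b k)); apply: map_f; rewrite mem_enum.
      * by apply: H2; apply: map_f; rewrite mem_enum.
    + move=> H; split.
      * move=> e /mapP [k _ ->].
        by rewrite /sat_move_eq /on_move_hyp /me_move /me_i /me_j /= !H; exact: hmv.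
      * by move=> f /mapP [k _ ->]; rewrite /sat_fix !H; exact: hfix. }
split=> //.
have mnz k : m k != (0,0) by have [] := Pnz _ (mP k).
have mgcd k : gcdz (m k).1 (m k).2 = 1 by have [] := Pnz _ (mP k).
have [C1 C2] := comb (R:=R) hab hset.
pose t k := tdef ((z (b k)).1 - (z (a k)).1) ((z (b k)).2 - (z (a k)).2) (m k).1 (m k).2.
have Ht k (bx : bool) : coord bx (z (b k)) - coord bx (z (a k)) = t k * (mc bx (m k))%:~R.
{ have nz : ((m k).1, (m k).2) != (0, 0) by move: (mnz k); case: (m k).
  have [h1 h2] := tdefP nz (hmv k).
  by case: bx; rewrite /coord /mc /=; [exact: h1 | exact: h2]. }
pose v k := sg R (a k) (b k) * t k.
have Hv (bx : bool) : \sum_(k < 3) v k * (mc bx (m k))%:~R = 0.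
{ rewrite -[RHS](C1 (fun i => coord bx (z i))); apply: eq_bigr => k _; by rewrite Ht /v mulrA. }
have Hw (bx : bool) : \sum_(k < 3) (w k)%:~R * (mc bx (m k))%:~R = 0 :> R.
{ rewrite !big_ord_recl big_ord0 addr0.
  case: bx; [move: sumc | move: sumd]; rewrite !big_ord_recl big_ord0 addr0 /= => /eqP;
  by rewrite -(intr_eq0 R) !intrD !intrM => /eqP. }
have Hlin k : v k = v ord0 / (w ord0)%:~R * (w k)%:~R.
{ have w0n : ((w ord0)%:~R : R) != 0 by rewrite intr_eq0.
  have nd : (((m (lift ord0 ord0)).1)%:~R * ((m (lift ord0 (lift ord0 ord0))).2)%:~R
     - ((m (lift ord0 (lift ord0 ord0))).1)%:~R * ((m (lift ord0 ord0)).2)%:~R : R) != 0.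
  { rewrite -!intrM -intrB intr_eq0; apply: Pnp; [exact: mP | exact: mP | exact: mdiff]. }
  have := Hv true; have := Hv false; have := Hw true; have := Hw false.
  rewrite !big_ord_recl !big_ord0 /= => h1 h2 h3 h4.
  have [e1 e2] := prop3 w0n nd h4 h3 h2 h1.
  by case: (ord3L k) => ->; [rewrite divfK | exact: e1 | exact: e2]. }
pose lam := v ord0 / (w ord0)%:~R.
have KF k (bx : bool) : coord bx (z (b k)) - coord bx (z (a k))
    = sg R (a k) (b k) * lam * (w k * mc bx (m k))%:~R.
{ rewrite Ht intrM.
  have -> : t k = sg R (a k) (b k) * v k by rewrite /v mulrA sg_sq mul1r.
  rewrite Hlin /lam; ring. }
clearbody lam.
have [bx [k1 [k2 [E1 E2 O1 O2]]]] : exists (bx : bool) k1 k2,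
   [/\ fx_isx (fx k1) = bx, fx_isx (fx k2) = bx, fx_one (fx k1) & ~~ fx_one (fx k2)].
{ pose B (bx : bool) := [exists k1, exists k2, [&& fx_isx (fx k1) == bx, fx_isx (fx k2) == bx,
        fx_one (fx k1) & ~~ fx_one (fx k2)]].
  case: (boolP (B true || B false)).
  - case/orP => /existsP [k1 /existsP [k2 /and4P [/eqP e1 /eqP e2 o1 o2]]];
      [exists true | exists false]; by exists k1, k2.
  rewrite negb_or => /andP [nBt nBf]; exfalso.
  have nB (bx : bool) : ~~ B bx by case: bx.
  pose p (bx : bool) : R := if [exists k, (fx_isx (fx k) == bx) && fx_one (fx k)] then 1 else 0.
  have Hp k : coord (fx_isx (fx k)) (z (fx_piece (fx k))) = p (fx_isx (fx k)).
  { have := hfix k; rewrite /sat_fix /coord /p => ->.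
    case: ifP => one.
    - by rewrite (_ : [exists _, _] = true) //; apply/existsP; exists k; rewrite eqxx one.
    - case: ifP => // /existsP [k0 /andP [/eqP E o0]].
      move/negP: (nB (fx_isx (fx k))); case.
      by apply/existsP; exists k0; apply/existsP; exists k; rewrite E eqxx o0 one. }
  pose z' : config R := fun i => (2 * (z i).1 - p true, 2 * (z i).2 - p false).
  have e : forall i, z' i = z i.
  { apply: huniq.
    - move=> k; have := hmv k; rewrite /on_move_hyp /z' /= => H.
      rewrite -[RHS](mulr0 2) -H; ring.
    - move=> k; have := Hp k; have := hfix k; rewrite /sat_fix /z' /coord /=.
      case: (fx_isx (fx k)) => /= H1 H2; rewrite -H1 H2; ring. }
  have ex1 i : (z i).1 = p true by have := congr1 fst (e i); rewrite /z' /= => h; lra.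
  have ex2 i : (z i).2 = p false by have := congr1 snd (e i); rewrite /z' /= => h; lra.
  by move: tri; rewrite /triangle_nondeg !ex1 !ex2 !subrr ?mul0r ?subrr eqxx. }
have [h Eh] : exists h, fx_isx (fx h) = ~~ bx.
{ case: (boolP [exists h, fx_isx (fx h) == ~~ bx]) => [/existsP [h /eqP] | nh]; first by exists h.
  exfalso.
  have all k : fx_isx (fx k) = bx.
  { move/existsPn: nh => /(_ k); by case: (fx_isx (fx k)); case: (bx). }
  pose z' : config R := fun i => if bx then ((z i).1, (z i).2 + 1) else ((z i).1 + 1, (z i).2).
  have e : z' ord0 = z ord0.
  { apply: huniq.
    - move=> k; have := hmv k; rewrite /on_move_hyp /z'.
      case: (bx) => /= H; rewrite -H; ring.
    - move=> k; have := hfix k; rewrite /sat_fix /z' (all k).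
      by case: (bx). }
  have := congr1 (fun q => q.1 + q.2) e; rewrite /z'; case: (bx) => /= H.
  all: move/eqP: H; rewrite -subr_eq0; set x := (z ord0).1; set y := (z ord0).2.
  - have -> : x + (y + 1) - (x + y) = 1 by ring. by rewrite oner_eq0.
  - have -> : x + 1 + y - (x + y) = 1 by ring. by rewrite oner_eq0. }
set N := (\max_(k < 3) _)%N.
set i := fx_piece (fx k1).
set j := fx_piece (fx k2).
have Hi : coord bx (z i) = 1.
{ rewrite /coord; have := hfix k1; rewrite /sat_fix E1 O1; exact: id. }
have Hj : coord bx (z j) = 0.
{ rewrite /coord; have := hfix k2; rewrite /sat_fix E2 (negbTE O2); exact: id. }
have nij : i != j.
{ apply/eqP => eij; move: Hi; rewrite eij Hj => /eqP; by rewrite eq_sym oner_eq0. }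
have HD i' j' : exists k (e : R), [/\ e = 0 \/ e = 1 \/ e = -1, i' != j' -> e != 0 &
   forall bx' : bool, coord bx' (z i') - coord bx' (z j')
     = e * (sg R (a k) (b k) * lam * (w k * mc bx' (m k))%:~R)].
{ case: (eqVneq i' j') => [<-|nij'].
  - exists ord0, 0; split; [by left | by rewrite eqxx | by move=> bx'; rewrite subrr mul0r].
  - have [k pk] := C2 _ _ nij'; exists k.
    move: pk; rewrite /pe; case/orP => /andP [/eqP ea /eqP eb].
    + exists (-1); split; [by right; right | by rewrite oppr_eq0 oner_eq0 |].
      by move=> bx'; rewrite -KF ea eb mulN1r opprB.
    + exists 1; split; [by right; left | by rewrite oner_eq0 |].
      by move=> bx'; rewrite -KF ea eb mul1r. }
have [k [e [He Hne He']]] := HD i j.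
set W := w k * mc bx (m k).
have ne : `|e| = 1.
{ move: (Hne nij); case: He => [->|[->|->]]; rewrite ?normrN ?normr1 //; by rewrite eqxx. }
have hN0 : `|lam| * (`|W|%N)%:R = 1.
{ have := He' bx; rewrite Hi Hj subr0 => /(congr1 Num.norm); rewrite normr1 !normrM ne sg_norm => H.
  rewrite natr_absz intr_norm [RHS]H; ring. }
have hN0' : ((`|W|%N)%:R : R) != 0.
{ apply/eqP => h0; move: hN0; rewrite h0 mulr0 => /eqP; by rewrite eq_sym oner_eq0. }
have lam_pos : 0 < `|lam|.
{ rewrite normr_gt0; apply/eqP => l0; move: hN0; rewrite l0 normr0 mul0r => /eqP; by rewrite eq_sym oner_eq0. }
have Hbound k' (bx' : bool) : (absz (w k' * mc bx' (m k'))%R <= absz W)%N.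
{ rewrite -(ler_nat R) -(ler_pM2l lam_pos) hN0 natr_absz intr_norm.
  have -> : `|lam| * `|(w k' * mc bx' (m k'))%:~R| = `|coord bx' (z (b k')) - coord bx' (z (a k'))|.
  { by rewrite KF !normrM sg_norm mul1r. }
  have [/andP [c1 c2] /andP [c3 c4]] := cube (b k').
  have [/andP [c5 c6] /andP [c7 c8]] := cube (a k').
  rewrite ler_norml /coord; case: (bx'); apply/andP; split; lra. }
have HN : N = `|W|%N.
{ apply/eqP; rewrite eqn_leq; apply/andP; split.
  - apply/bigmax_leqP => k' _; rewrite geq_max; apply/andP; split; [exact: (Hbound k' true) | exact: (Hbound k' false)].
  - apply: leq_trans (leq_bigmax k) => /=; rewrite /W; case: (bx) => /=; [exact: leq_maxl | exact: leq_maxr]. }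
rewrite HN.
set NN := `|W|%N.
have [s0 [Hs0 lamE]] : exists s0 : R, (s0 = 1 \/ s0 = -1) /\ lam = s0 / NN%:R.
{ exists (lam * NN%:R); split.
  - by apply: norm1; rewrite normrM normr_nat.
  - by rewrite mulfK. }
have NN0 : (0 < NN)%N by rewrite lt0n -(pnatr_eq0 R).
split; first exact: NN0.
split.
{ have HI (bx' : bool) : exists p0, coord bx' (z p0) \is a Num.int.
  { case: (eqVneq bx' bx) => [->|nb]; first by exists i; rewrite Hi rpred1.
    exists (fx_piece (fx h)); have := hfix h; rewrite /sat_fix Eh /coord.
    have -> : ~~ bx = bx' by move: nb; case: (bx); case: (bx').
    move=> ->; case: ifP => _; [exact: rpred1 | exact: rpred0]. }
  have gen l (bx' : bool) : (NN%:R : R) * coord bx' (z l) \is a Num.int.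
  { have [p0 Hp0] := HI bx'. have [k' [e' [He'0 _ He'1]]] := HD l p0.
    have -> : coord bx' (z l) = coord bx' (z p0) + (coord bx' (z l) - coord bx' (z p0)).
    { by rewrite addrC subrK. }
    rewrite He'1 mulrDr; apply: rpredD; first by apply: rpredM => //; exact: natr_int.
    have -> : (NN%:R : R) * (e' * (sg R (a k') (b k') * lam * (w k' * mc bx' (m k'))%:~R))
       = e' * sg R (a k') (b k') * s0 * (w k' * mc bx' (m k'))%:~R.
    { rewrite lamE; field; exact: hN0'. }
    apply: rpredM; [apply: rpredM; [apply: rpredM|]|].
    - by case: He'0 => [->|[->|->]]; rewrite ?rpredN ?rpred0 ?rpred1.
    - exact: sg_int.
    - by case: Hs0 => ->; rewrite ?rpredN rpred1.
    - exact: intr_int. }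
  move=> l; split; [exact: (gen l true) | exact: (gen l false)]. }
move=> M M0 HM.
have HMc (bx' : bool) l : (M%:R : R) * coord bx' (z l) \is a Num.int.
{ by have [h1 h2] := HM l; case: (bx'). }
pose q : R := M%:R / NN%:R.
have Hq1 k' (bx' : bool) : q * (w k' * mc bx' (m k'))%:~R \is a Num.int.
{ have H1 : (M%:R : R) * (sg R (a k') (b k') * lam * (w k' * mc bx' (m k'))%:~R) \is a Num.int.
  { rewrite -KF mulrBr; apply: rpredB; exact: HMc. }
  have -> : q * (w k' * mc bx' (m k'))%:~R
     = M%:R * (sg R (a k') (b k') * lam * (w k' * mc bx' (m k'))%:~R) * sg R (a k') (b k') * s0.
  { have s0sq : s0 * s0 = 1 by case: Hs0 => ->; rewrite ?mulrNN mulr1.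
    rewrite lamE /q.
    transitivity (M%:R / NN%:R * (w k' * mc bx' (m k'))%:~R
         * ((sg R (a k') (b k') * sg R (a k') (b k')) * (s0 * s0))); last by ring.
    by rewrite sg_sq s0sq !mulr1. }
  apply: rpredM; [apply: rpredM => //; exact: sg_int | by case: Hs0 => ->; rewrite ?rpredN rpred1]. }
have Hq2 k' : q * (w k')%:~R \is a Num.int.
{ have [u [v' Huv]] := Bezoutz (m k').1 (m k').2.
  rewrite mgcd in Huv.
  have E : (u%:~R * ((m k').1)%:~R + v'%:~R * ((m k').2)%:~R : R) = 1.
  { by rewrite -!intrM -intrD Huv. }
  have -> : q * (w k')%:~R = u%:~R * (q * (w k' * mc true (m k'))%:~R)
                            + v'%:~R * (q * (w k' * mc false (m k'))%:~R).
  { rewrite /= !intrM.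
    transitivity (q * (w k')%:~R * (u%:~R * ((m k').1)%:~R + v'%:~R * ((m k').2)%:~R));
      [by rewrite E mulr1 | ring]. }
  by repeat (first [exact: intr_int | exact: Hq1 | apply: rpredD | apply: rpredM]). }
have Hq : q \is a Num.int.
{ have [u0 [u1 Hu]] := Bezoutz (w 0) (w 1).
  have [p0 [p1 Hp]] := Bezoutz (gcdz (w 0) (w 1)) (w 2).
  rewrite wgcd -Hu in Hp.
  have E : (p0%:~R * (u0%:~R * (w 0)%:~R + u1%:~R * (w 1)%:~R) + p1%:~R * (w 2)%:~R : R) = 1.
  { by rewrite -?intrM -?intrD -?intrM -?intrD Hp. }
  have -> : q = p0%:~R * (u0%:~R * (q * (w 0)%:~R) + u1%:~R * (q * (w 1)%:~R))
                + p1%:~R * (q * (w 2)%:~R).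
  { transitivity (q * (p0%:~R * (u0%:~R * (w 0)%:~R + u1%:~R * (w 1)%:~R) + p1%:~R * (w 2)%:~R));
      [by rewrite E mulr1 | ring]. }
  by repeat (first [exact: intr_int | exact: Hq2 | apply: rpredD | apply: rpredM]). }
have q0 : 0 < q by rewrite /q divr_gt0 // ltr0n.
have /intrP [n qn] := Hq.
have q1 : 1 <= q by rewrite qn ler1z -gtz0_ge1 -(ltr0z R) -qn.
rewrite -(ler_nat R) -[X in X <= _]mul1r -ler_pdivlMr ?ltr0n //.
Qed.
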